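(* Let $Q>0$ and $\Gamma>0$. Let $f$ be a nonnegative random variable with a continuous probability density function, and let $I$ be a nonnegative random variable independent of $f$ with $\mathbb{E}[I]=\Gamma$. Let $\mu_a>0$ satisfy $\mathbb{E}\left[\left(\frac{1}{\mu_a}-\frac{1+I}{f}\right)^+\right]=Q$, and let $\mu_p>0$ satisfy $\mathbb{E}\left[\left(\frac{1}{\mu_p}-\frac{1+\Gamma}{f}\right)^+\right]=Q$. Define $$C^{{\rm ER},a}_{\rm PR,WF}=\mathbb{E}\left[\left(\log\frac{f}{\mu_a(1+I)}\right)^+\right],\qquad C^{{\rm ER},p}_{\rm PR,WF}=\mathbb{E}\left[\left(\log\frac{f}{\mu_p(1+\Gamma)}\right)^+\right].$$ Then $C^{{\rm ER},a}_{\rm PR,WF}\geq C^{{\rm ER},p}_{\rm PR,WF}$.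
   Context: $(a)^+=\max(0,a)$. Setting: a primary radio (PR) fading link with channel power gain $f$ and unit noise power. $I$ is the interference power from a cognitive radio at the PR receiver, independent of $f$. The average-interference-power (AIP) case has random $I$ with $\mathbb{E}[I]=\Gamma$. The peak-interference-power (PIP) case has interference equal to $\Gamma$ always. The PR uses water-filling power control $q=(1/\mu-(1+I)/f)^+$ (respectively $(1/\mu-(1+\Gamma)/f)^+$), subject to average transmit power $Q$. Thus $C^{{\rm ER},a}_{\rm PR,WF}$ and $C^{{\rm ER},p}_{\rm PR,WF}$ are the PR ergodic capacities $\max_{q\ge0,\,\mathbb{E}[q]\le Q}\mathbb{E}[\log(1+fq/(1+I))]$ (respectively with $I$ replaced by $\Gamma$), attained by water-filling. *)

(* Defs.v *)
From HB Require Import structures.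
From mathcomp Require Import all_boot all_order all_algebra.
From mathcomp Require Import all_classical all_reals all_analysis.
Set Implicit Arguments. Unset Strict Implicit. Unset Printing Implicit Defensive.
Import Order.TTheory GRing.Theory Num.Theory.
Import numFieldNormedType.Exports.
Local Open Scope classical_set_scope.
Local Open Scope ring_scope.

Definition pos_part {R : realType} (a : R) : R := Num.max 0 a.

Definition indep_RV {d} {T : measurableType d} {R : realType}
  (P : probability T R) (X Y : T -> R) : Prop :=
  forall A B : set R, measurable A -> measurable B ->
    P (X @^-1` A `&` Y @^-1` B) = (P (X @^-1` A) * P (Y @^-1` B))%E.

Definition is_pdf {d} {T : measurableType d} {R : realType}
  (P : probability T R) (X : T -> R) (p : R -> R) : Prop :=
  (forall x, 0 <= p x) /\
  forall A : set R, measurable A ->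
    P (X @^-1` A) = (\int[lebesgue_measure]_(x in A) (p x)%:E)%E.

(* Main.v *)
Require Import Defs.
From HB Require Import structures.
From mathcomp Require Import all_boot all_order all_algebra.
From mathcomp Require Import all_classical all_reals all_analysis.
From mathcomp Require Import measurable_realfun.
From mathcomp Require Import ring lra.
Import Order.TTheory GRing.Theory Num.Theory.
Import numFieldNormedType.Exports.
Local Open Scope classical_set_scope.
Local Open Scope ring_scope.

Lemma measurable_inv (R : realType) : measurable_fun [set: R] (fun x : R => x^-1).
Proof.
have -> : (fun x : R => x^-1) = (fun x => if x == 0 then 0 else x^-1).
  by apply: funext => x; case: eqP => // ->; rewrite invr0.
apply: measurable_fun_if => //.
  exact: (@measurable_fun_eqr _ _ _ _ id (cst 0)).
rewrite setTI.
  have -> : (fun x : R => x == 0) @^-1` [set false] = [set x | x != 0].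
    by apply/seteqP; split => x /=; case: eqP.
  apply: open_continuous_measurable_fun; first exact: open_neq.
  by move=> x; rewrite inE => /inv_continuous.
Qed.

Lemma pdf_null d (T : measurableType d) (R : realType) (P : probability T R)
  (f : T -> R) (p : R -> R) : is_pdf P f p -> P (f @^-1` [set 0]) = 0%E.
Proof.
by move=> [_ pP]; rewrite pP ?integral_set1 //; exact: measurable_set1.
Qed.

Lemma measurable_pos_part (R : realType) : measurable_fun [set: R] (@pos_part R).
Proof.
by apply: measurable_maxr => //; exact: measurable_cst.
Qed.

Section reals.
Context (R : realType).

Lemma ln_le_sub1 (z : R) : 0 < z -> ln z <= z - 1.
Proof.
move=> z0; have := @le_ln1Dx R (z - 1).
have -> : 1 + (z - 1) = z by ring.
by apply; lra.
Qed.

Lemma ln_divge (a b : R) : 0 < a -> 0 < b -> 1 - b / a <= ln a - ln b.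
Proof.
move=> a0 b0; have := @ln_le_sub1 (b / a) (divr_gt0 b0 a0).
rewrite ln_div ?posrE //; lra.
Qed.

Lemma tangent_ineq (c y G : R) : 0 <= c -> 0 <= y -> 0 <= G ->
  ln (1 + c / (1 + G)) + c / ((1 + G) * (1 + G + c)) * G <=
  ln (1 + c / (1 + y)) + c / ((1 + G) * (1 + G + c)) * y.
Proof.
move=> c0 y0 G0.
have u0 : 0 < 1 + y by lra.
have v0 : 0 < 1 + G by lra.
have a0 : 0 < 1 + c / (1 + y) by have := divr_ge0 c0 (ltW u0); lra.
have b0 : 0 < 1 + c / (1 + G) by have := divr_ge0 c0 (ltW v0); lra.
have := @ln_divge _ _ a0 b0.
suff : c / ((1 + G) * (1 + G + c)) * (G - y) <=
  1 - (1 + c / (1 + G)) / (1 + c / (1 + y)) by lra.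
have H : 1 - (1 + c / (1 + G)) / (1 + c / (1 + y)) -
   c / ((1 + G) * (1 + G + c)) * (G - y)
   = c * (G - y) ^+ 2 / ((1 + G) * (1 + y + c) * (1 + G + c)).
  field; rewrite !lt0r_neq0 //; lra.
rewrite -subr_ge0 H.
apply: divr_ge0; first by apply: mulr_ge0 => //; exact: sqr_ge0.
by apply: mulr_ge0; [apply: mulr_ge0|]; lra.
Qed.

Lemma wf_ineq (x y q mu : R) : 0 < x -> 0 <= y -> 0 <= q -> 0 < mu ->
  ln (1 + x * q / (1 + y)) + mu * pos_part (mu^-1 - (1 + y) / x) <=
  pos_part (ln (x / (mu * (1 + y)))) + mu * q.
Proof.
move=> x0 y0 q0 mu0.
have u0 : 0 < 1 + y by lra.
have z0 : 0 < x / (mu * (1 + y)) by apply: divr_gt0 => //; apply: mulr_gt0.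
have e1 : mu * (mu^-1 - (1 + y) / x) = 1 - (x / (mu * (1 + y)))^-1.
  field; rewrite !lt0r_neq0 //.
have e2 : x * q / (1 + y) = x / (mu * (1 + y)) * (mu * q).
  field; rewrite !lt0r_neq0 //.
have a0 : 0 <= x * q / (1 + y).
  by apply: divr_ge0; [apply: mulr_ge0; lra| lra].
rewrite /pos_part.
have [z1|z1] := leP 1 (x / (mu * (1 + y))).
- have w0 : 0 <= mu^-1 - (1 + y) / x.
    by rewrite -(pmulr_rge0 _ mu0) e1 subr_ge0 invf_le1.
  rewrite (max_r w0) (max_r (ln_ge0 z1)) e1.
  have := @ln_divge (x / (mu * (1 + y))) (1 + x * q / (1 + y)) z0 (ltr_pwDl ltr01 a0).
  rewrite (_ : (1 + x * q / (1 + y)) / (x / (mu * (1 + y))) =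
    (x / (mu * (1 + y)))^-1 + mu * q); first lra.
  field; rewrite !lt0r_neq0 //.
- have w0 : mu^-1 - (1 + y) / x <= 0.
    by rewrite -(pmulr_rle0 _ mu0) e1 subr_le0 invf_ge1 // ltW.
  rewrite (max_l w0) (max_l (ln_le0 (ltW z1))) mulr0 addr0 add0r.
  apply: le_trans (le_ln1Dx _) _; first lra.
  rewrite e2 ler_piMl //; last lra.
  by apply: mulr_ge0; lra.
Qed.
End reals.

Section indep.
Local Open Scope ereal_scope.
Context d (T : measurableType d) (R : realType) (P : probability T R).

Lemma indep_fubini (Xm Ym : {mfun T >-> R}) (H : R * R -> \bar R) :
  measurable_fun [set: (R * R)%type] H -> (forall z, 0 <= H z) -> indep_RV P Xm Ym ->
  \int[P]_t H (Xm t, Ym t) =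
  \int[distribution P Xm]_x \int[distribution P Ym]_y H (x, y).
Proof.
move=> mH H0 ind.
have mX : measurable_fun setT Xm by exact: measurable_funPT.
have mY : measurable_fun setT Ym by exact: measurable_funPT.
have mXY : measurable_fun setT (fun t => (Xm t, Ym t)).
  exact: measurable_fun_pair.
pose XYm : {mfun T >-> (R * R)%type} :=
  HB.pack (fun t => (Xm t, Ym t)) (isMeasurableFun.Build _ _ _ _ _ mXY).
rewrite -(@fubini_tonelli1 _ _ _ _ _ (distribution P Xm) (distribution P Ym) _ mH H0).
have -> : \int[P]_t H (Xm t, Ym t) = \int[distribution P XYm]_z H z.
  rewrite (ge0_integral_pushforward mXY) //=.
apply: eq_measure_integral => A mA _.
apply/esym; apply: (@product_measure_unique _ _ _ _ _ (distribution P Xm) (distribution P Ym) (distribution P XYm)) => //.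
Qed.
End indep.

Section more_reals.
Context (R : realType).

Lemma pos_part_ge0 (a : R) : 0 <= pos_part a.
Proof. by rewrite /pos_part le_max lexx. Qed.

Lemma pos_part_id (a : R) : 0 <= a -> pos_part a = a.
Proof. by move=> a0; rewrite /pos_part max_r. Qed.

Lemma cc_eq (lp G x : R) : 0 < x ->
  pos_part (lp * x - (1 + G)) = x * pos_part (lp - (1 + G) / x).
Proof.
move=> x0; rewrite /pos_part.
have -> : lp * x - (1 + G) = x * (lp - (1 + G) / x).
  by field; rewrite lt0r_neq0.
have [h|h] := leP 0 (lp - (1 + G) / x).
- by rewrite !max_r // mulr_ge0 // ltW.
- by rewrite !max_l ?mulr0 // ?ltW // pmulr_rlt0.
Qed.

Lemma phi0_eq (mu G x : R) : 0 < mu -> 0 <= G -> 0 <= x ->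
  pos_part (ln (x / (mu * (1 + G)))) =
  ln (1 + pos_part (mu^-1 * x - (1 + G)) / (1 + G)).
Proof.
move=> mu0 G0 x0.
have v0 : 0 < 1 + G by lra.
have e : 1 + (mu^-1 * x - (1 + G)) / (1 + G) = x / (mu * (1 + G)).
  by field; rewrite !lt0r_neq0.
rewrite /pos_part.
have [h|h] := leP 0 (mu^-1 * x - (1 + G)).
- rewrite e max_r //; apply: ln_ge0.
  by rewrite -e lerDl divr_ge0 // ltW.
- rewrite mul0r addr0 ln1 max_l //; apply: ln_le0.
  rewrite -e; have : (mu^-1 * x - (1 + G)) / (1 + G) <= 0.
    by rewrite pmulr_lle0 ?invr_gt0 // ltW.
  lra.
Qed.
End more_reals.

Ltac mtac := repeat first [ assumption | exact: measurable_cst | exact: measurable_id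
  | apply: measurable_funB | apply: measurable_funD | apply: measurable_funM
  | apply: (measurableT_comp (measurable_pos_part _))
  | apply: (measurableT_comp (@measurable_ln _))
  | apply: (measurableT_comp (measurable_inv _)) ].

Theorem theorem4p2 (d : measure_display) (T : measurableType d) (R : realType)
  (P : probability T R) (f I : T -> R) (Q Gamma mu_a mu_p : R) :
  0 < Q -> 0 < Gamma ->
  measurable_fun setT f -> measurable_fun setT I ->
  (forall t, 0 <= f t) -> (forall t, 0 <= I t) ->
  (exists p : R -> R, is_pdf P f p /\ {within `[0, +oo[, continuous p}) ->
  indep_RV P f I ->
  (\int[P]_t (I t)%:E = Gamma%:E)%E ->
  0 < mu_a ->
  (\int[P]_t (pos_part (mu_a^-1 - (1 + I t) / f t))%:E = Q%:E)%E ->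
  0 < mu_p ->
  (\int[P]_t (pos_part (mu_p^-1 - (1 + Gamma) / f t))%:E = Q%:E)%E ->
  (\int[P]_t (pos_part (ln (f t / (mu_p * (1 + Gamma)))))%:E
     <= \int[P]_t (pos_part (ln (f t / (mu_a * (1 + I t)))))%:E)%E.
Proof.
move=> Q0 G0 mf mI f0 I0 [p [pdf _]] ind EI mua0 Ea mup0 Ep.
pose fm : {mfun T >-> R} := HB.pack f (isMeasurableFun.Build _ _ _ _ _ mf).
pose Im : {mfun T >-> R} := HB.pack I (isMeasurableFun.Build _ _ _ _ _ mI).
pose cc (x : R) := pos_part (mu_p^-1 * x - (1 + Gamma)).
pose gH (z : (R * R)%type) := (ln (1 + cc z.1 / (1 + pos_part z.2)))%:E.
pose gg (x : R) := cc x / ((1 + Gamma) * (1 + Gamma + cc x)).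
pose phi0 (x : R) := ln (1 + cc x / (1 + Gamma)).
have cc0 x : 0 <= cc x by exact: pos_part_ge0.
have G0' : 0 <= Gamma by exact: ltW.
have gg0 x : 0 <= gg x.
  by apply: divr_ge0 => //; apply: mulr_ge0; have := cc0 x; lra.
have phi00 x : 0 <= phi0 x.
  apply: ln_ge0; rewrite lerDl; apply: divr_ge0 => //; lra.
have gH0 z : (0 <= gH z)%E.
  rewrite lee_fin; apply: ln_ge0; rewrite lerDl; apply: divr_ge0 => //.
  have := @pos_part_ge0 R z.2; lra.
have mcc : measurable_fun setT cc by rewrite /cc; mtac.
have mphi0 : measurable_fun setT phi0 by rewrite /phi0; mtac.
have mgH : measurable_fun setT gH.
  apply/measurable_EFinP; rewrite /gH /=.
  apply: (measurableT_comp (@measurable_ln _)).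
  apply: measurable_funD; first exact: measurable_cst.
  apply: measurable_funM.
    exact: (measurableT_comp mcc measurable_fst).
  apply: (measurableT_comp (measurable_inv _)).
  apply: measurable_funD; first exact: measurable_cst.
  exact: (measurableT_comp (measurable_pos_part _) measurable_snd).
have mfm : measurable_fun setT fm by [].
have mIm : measurable_fun setT Im by [].
have stepA : (\int[P]_t (pos_part (ln (f t / (mu_p * (1 + Gamma)))))%:E =
    \int[distribution P fm]_x (phi0 x)%:E)%E.
  rewrite ge0_integral_distribution; [|exact/measurable_EFinP|by move=> x; rewrite lee_fin].
  apply: eq_integral => t _ /=.
  by rewrite /phi0 /cc phi0_eq.
have EIp : (\int[distribution P Im]_y (pos_part y)%:E = Gamma%:E)%E.
  rewrite ge0_integral_distribution; [|apply/measurable_EFinP; exact: measurable_pos_part|by move=> x; rewrite lee_fin pos_part_ge0].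
  rewrite -EI; apply: eq_integral => t _ /=.
  by rewrite pos_part_id.
have mgHx x : measurable_fun setT (fun y => gH (x, y)).
  exact: measurable_fun_pair2.
have jensen x : ((phi0 x)%:E <= fubini_F (distribution P Im) gH x)%E.
  have e1 : ((phi0 x + gg x * Gamma)%:E =
      \int[distribution P Im]_y ((phi0 x + gg x * Gamma)%:E))%E.
    rewrite (_ : (fun _ => _) = cst (phi0 x + gg x * Gamma)%:E) //.
    by rewrite integral_cst //= probability_setT mule1.
  have e2 : (\int[distribution P Im]_y (gH (x, y) + (gg x)%:E * (pos_part y)%:E) =
     fubini_F (distribution P Im) gH x + (gg x * Gamma)%:E)%E.
    rewrite ge0_integralD //; last first.
    - apply: measurable_funeM; apply/measurable_EFinP; exact: measurable_pos_part.
    - by move=> y _; rewrite mule_ge0 // lee_fin ?pos_part_ge0.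
    rewrite ge0_integralZl //; last first.
    - by rewrite lee_fin.
    - by move=> y _; rewrite lee_fin pos_part_ge0.
    - apply/measurable_EFinP; exact: measurable_pos_part.
    by rewrite EIp EFinM.
  have : ((phi0 x + gg x * Gamma)%:E <=
      fubini_F (distribution P Im) gH x + (gg x * Gamma)%:E)%E.
    rewrite e1 -e2; apply: ge0_le_integral => //.
    - by move=> y _; rewrite lee_fin addr_ge0 // mulr_ge0.
    - apply: emeasurable_funD => //; apply: measurable_funeM.
      apply/measurable_EFinP; exact: measurable_pos_part.
    - move=> y _; rewrite /gH -EFinM -EFinD lee_fin /phi0 /gg.
      apply: tangent_ineq => //; exact: pos_part_ge0.
  by rewrite EFinD leeD2rE.
have stepC : (\int[distribution P fm]_x (phi0 x)%:E <=
    \int[distribution P fm]_x fubini_F (distribution P Im) gH x)%E.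
  apply: ge0_le_integral => //.
  - by move=> x _; rewrite lee_fin.
  - exact/measurable_EFinP.
  - exact: measurable_fun_fubini_tonelli_F.
rewrite stepA; apply: (le_trans stepC).
rewrite -indep_fubini //=.
pose qa t := pos_part (mu_a^-1 - (1 + I t) / f t).
pose qp t := pos_part (mu_p^-1 - (1 + Gamma) / f t).
pose Ca t := pos_part (ln (f t / (mu_a * (1 + I t)))).
have mqa : measurable_fun setT qa by rewrite /qa; mtac.
have mqp : measurable_fun setT qp by rewrite /qp; mtac.
have mCa : measurable_fun setT Ca by rewrite /Ca; mtac.
have mA : measurable_fun setT (fun t => gH (f t, I t)).
  exact: (measurableT_comp mgH (measurable_fun_pair mf mI)).
have muQ : (mu_a * Q)%:E \is a fin_num by [].
rewrite -(leeD2rE _ _ muQ).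
have eL : (\int[P]_t gH (f t, I t) + (mu_a * Q)%:E =
    \int[P]_t (gH (f t, I t) + mu_a%:E * (qa t)%:E))%E.
  rewrite ge0_integralD //; last first.
  - by apply: measurable_funeM; exact/measurable_EFinP.
  - by move=> t _; rewrite -EFinM lee_fin mulr_ge0 ?pos_part_ge0 // ltW.
  rewrite ge0_integralZl //; last first.
  - by rewrite lee_fin ltW.
  - by move=> t _; rewrite lee_fin pos_part_ge0.
  - exact/measurable_EFinP.
  by rewrite Ea EFinM.
have eR : (\int[P]_t (Ca t)%:E + (mu_a * Q)%:E =
    \int[P]_t ((Ca t)%:E + mu_a%:E * (qp t)%:E))%E.
  rewrite ge0_integralD //; last first.
  - by apply: measurable_funeM; exact/measurable_EFinP.
  - by move=> t _; rewrite -EFinM lee_fin mulr_ge0 ?pos_part_ge0 // ltW.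
  - exact/measurable_EFinP.
  - by move=> t _; rewrite lee_fin pos_part_ge0.
  rewrite ge0_integralZl //; last first.
  - by rewrite lee_fin ltW.
  - by move=> t _; rewrite lee_fin pos_part_ge0.
  - exact/measurable_EFinP.
  by rewrite Ep EFinM.
rewrite eL eR.
apply: ae_ge0_le_integral => //.
- move=> t _; apply: adde_ge0 => //.
  by rewrite -EFinM lee_fin mulr_ge0 ?pos_part_ge0 // ltW.
- apply: emeasurable_funD => //; apply: measurable_funeM.
  exact/measurable_EFinP.
- move=> t _; apply: adde_ge0; first by rewrite lee_fin pos_part_ge0.
  by rewrite -EFinM lee_fin mulr_ge0 ?pos_part_ge0 // ltW.
- apply: emeasurable_funD; first exact/measurable_EFinP.
  apply: measurable_funeM; exact/measurable_EFinP.
exists (f @^-1` [set 0]); split.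
- by rewrite -[X in measurable X]setTI; apply: (mf) => //; exact: measurable_set1.
- exact: pdf_null pdf.
move=> t /= Hn; apply/eqP/negPn/negP => ft0'; apply: Hn => _.
have ft0 : 0 < f t by rewrite lt_neqAle eq_sym ft0' f0.
rewrite /gH /= -!EFinM -!EFinD lee_fin /cc (@pos_part_id R _ (I0 t)) cc_eq //.
apply: wf_ineq => //; exact: pos_part_ge0.
Qed.
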